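(* Let $X$ be a finite set with $|X|>1$ and let $s=s_k s_{k-1}\cdots s_1\in\mathbb F_X$ be a reduced word with $s_i\in X\cup X^{-1}$. Then for every $n\in\mathbb N$, $$P(s^{-1},n)=\bigcup_{i=0}^k B_{\frac{n-k}{2}}\, s_i\cdots s_1,$$ where for $i=0$ the product $s_i\cdots s_1$ is the empty word.
   Context: $\mathbb F_X$ is the free group on $X$ with reduced word length $|\cdot|$; for real $r$, $B_r=\{\omega\in\mathbb F_X:|\omega|\le r\}$. For $s\in\mathbb F_X$ and $n\in\mathbb N$, $P(s,n)=\{\omega\in\mathbb F_X:|\omega|+|\omega s|\le n\}$. *)

(* Defs.v *)
(* Free group F_X on a finite set X, realized concretely as
   reduced words over the alphabet X x bool ((x,true) = x, (x,false) = x^-1). *)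
From mathcomp Require Import all_boot all_order all_algebra.
Set Implicit Arguments. Unset Strict Implicit. Unset Printing Implicit Defensive.
Import Order.TTheory GRing.Theory Num.Theory.

Section FreeGroup.
Variable X : finType.

Definition letter := (X * bool)%type.
Definition linv (a : letter) : letter := (a.1, ~~ a.2).

Definition reducedw (w : seq letter) : bool := sorted (fun a b => b != linv a) w.

Definition push (a : letter) (s : seq letter) : seq letter :=
  if s is b :: s' then (if b == linv a then s' else a :: s) else [:: a].
Definition reduce (w : seq letter) : seq letter := foldr push [::] w.

Definition wmul (u v : seq letter) : seq letter := reduce (u ++ v).
Definition winv (w : seq letter) : seq letter := rev (map linv w).
Definition wlen (w : seq letter) : nat := size w.

(* B_r = { w in F_X : |w| <= r }, r real (here rational suffices) *)
Definition ball (r : rat) (w : seq letter) : Prop :=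
  reducedw w /\ ((wlen w)%:R <= r)%R.

Definition Pset (s : seq letter) (n : nat) (w : seq letter) : Prop :=
  reducedw w /\ wlen w + wlen (wmul w s) <= n.

End FreeGroup.

(* Main.v *)
Require Import Defs.
From mathcomp Require Import all_boot all_order all_algebra.
From mathcomp Require Import ring lra.
Set Implicit Arguments. Unset Strict Implicit. Unset Printing Implicit Defensive.

Section Aux.
Variable X : finType.
Implicit Types (a : letter X) (u v w x y z t : seq (letter X)).

Lemma linvK a : linv (linv a) = a.
Proof. by case: a => p [] . Qed.

Lemma linv_inj : injective (@linv X).
Proof. exact: can_inj linvK. Qed.

Definition act u z := foldr (@push X) z u.

Lemma red_cons a x : reducedw (a :: x) -> reducedw x.
Proof. exact: path_sorted. Qed.

Lemma push_red a x : reducedw x -> reducedw (push a x).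
Proof.
case: x => [|b x] //= H.
case: ifP => E; first exact: path_sorted H.
by rewrite /reducedw /= E.
Qed.

Lemma act_red u z : reducedw z -> reducedw (act u z).
Proof. by elim: u => //= a u IH H; apply: push_red; apply: IH. Qed.

Lemma reduce_red u : reducedw (reduce u).
Proof. exact: (act_red u (z:=[::])). Qed.

Lemma pushK a x : reducedw x -> push a (push (linv a) x) = x.
Proof.
case: x => [|b x] /=; first by rewrite eqxx.
case: ifP => [/eqP E|E] H.
  rewrite linvK in E; rewrite E. case: x H => [|c x] //= /andP[H _].
  by rewrite -E (negbTE H).
by rewrite /= eqxx.
Qed.

Lemma act_cat u v z : act (u ++ v) z = act u (act v z).
Proof. exact: foldr_cat. Qed.

Lemma reduce_cat u v : reduce (u ++ v) = act u (reduce v).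
Proof. exact: foldr_cat. Qed.

Lemma act_push a y z : reducedw y -> reducedw z ->
  act (push a y) z = push a (act y z).
Proof.
case: y => [|b y] //= Hy Hz.
case: ifP => [/eqP E|E] //.
by rewrite E pushK //; apply: act_red.
Qed.

Lemma act_reduce u z : reducedw z -> act (reduce u) z = act u z.
Proof.
move=> Hz; elim: u => //= a u IH.
by rewrite act_push ?IH //; apply: reduce_red.
Qed.

Lemma reduce_id w : reducedw w -> reduce w = w.
Proof.
elim: w => //= a w IH H.
rewrite IH; last exact: red_cons H.
case: w H {IH} => //= b w /andP[E _].
by rewrite (negbTE E).
Qed.

Lemma winv_rcons t a : winv (rcons t a) = linv a :: winv t.
Proof. by rewrite /winv map_rcons rev_rcons. Qed.

Lemma winv_cat u v : winv (u ++ v) = winv v ++ winv u.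
Proof. by rewrite /winv map_cat rev_cat. Qed.

Lemma act_inv t z : reducedw z -> act (t ++ winv t) z = z.
Proof.
move=> Hz; elim/last_ind: t => [|t a IH] //.
rewrite winv_rcons cat_rcons act_cat /= pushK; last exact: act_red.
by rewrite -act_cat.
Qed.

Lemma size_push a x : size (push a x) <= (size x).+1.
Proof. by case: x => //= b x; case: ifP => //= _; apply: leqW; apply: leqnSn. Qed.

Lemma size_act u z : size (act u z) <= size u + size z.
Proof.
elim: u => //= a u IH; apply: leq_trans (size_push _ _) _; by rewrite ltnS.
Qed.

Lemma winv_red t : reducedw t -> reducedw (winv t).
Proof.
rewrite /reducedw /winv rev_sorted sorted_map => H.
apply: sub_sorted H => a b /=; by rewrite linvK eq_sym.
Qed.

Lemma red_prefix u v : reducedw (u ++ v) -> reducedw u.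
Proof. by move/cat_sorted2 => []. Qed.

Lemma red_join u a b v : reducedw (rcons u a) -> reducedw (b :: v) ->
  b != linv a -> reducedw (rcons u a ++ b :: v).
Proof.
rewrite /reducedw => Hu Hv E; rewrite cat_rcons sorted_cat_cons Hu /= E.
exact: Hv.
Qed.

Lemma decomp w s : reducedw w -> reducedw s ->
  exists b c d, [/\ w = b ++ c, s = d ++ c & reducedw (b ++ winv d)].
Proof.
elim/last_ind: w s => [|w x IH] s Hw Hs.
  exists [::], [::], s; split; [by [] | by rewrite cats0 | exact: winv_red].
case/lastP: s Hs => [|s y] Hs.
  by exists (rcons w x), [::], [::]; rewrite !cats0.
case: (eqVneq x y) => [E|E].
  subst y.
  have Hw' := Hw; have Hs' := Hs; rewrite -cats1 in Hw'; rewrite -cats1 in Hs'.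
  have [b [c [d [H1 H2 H3]]]] := IH s (red_prefix Hw') (red_prefix Hs').
  exists b, (rcons c x), d; split => //; by rewrite -rcons_cat ?H1 ?H2.
exists (rcons w x), [::], (rcons s y); rewrite !cats0; split => //.
rewrite winv_rcons; apply: red_join => //.
  by rewrite -winv_rcons; apply: winv_red.
by apply: contra E => /eqP /linv_inj ->.
Qed.
End Aux.

From mathcomp Require Import zify.
Import Order.TTheory GRing.Theory Num.Theory.

Theorem lemma3p4 (X : finType) (hX : 1 < #|X|) (s : seq (letter X))
  (hs : reducedw s) (n : nat) (w : seq (letter X)) :
  Pset (winv s) n w <->
  exists i : nat, i <= size s /\
    exists b : seq (letter X),
      ball ((n%:R - (size s)%:R) / 2%:R)%R b /\ w = wmul b (drop (size s - i) s).
Proof.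
rewrite /Pset /ball /wlen /wmul; split.
- case=> Hw Hn.
  have [b [c [d [E1 E2 Hbd]]]] := decomp Hw hs.
  have Hb : reducedw b by apply: (@red_prefix _ b c); rewrite -E1.
  have Hd : reducedw (winv d) by case: (cat_sorted2 Hbd).
  have Hsz : size (reduce (w ++ winv s)) = size b + size d.
    rewrite E1 E2 winv_cat -catA reduce_cat catA reduce_cat act_inv ?reduce_red //.
    by rewrite (reduce_id Hd) -(reduce_id Hd) -reduce_cat (reduce_id Hbd) size_cat
      /winv size_rev size_map.
  rewrite Hsz E1 size_cat in Hn.
  exists (size c); split; first by rewrite E2 size_cat leq_addl.
  exists b; split; last first.
    by rewrite E2 size_cat addnK drop_size_cat // -E1 reduce_id.
  split => //.
  have H : (size b * 2 + (size d + size c) <= n)%N by lia.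
  rewrite -(ler_nat rat) natrD natrM in H.
  rewrite E2 size_cat natrD; lra.
- case=> i [Hi [b [[Hb Hr] ->]]].
  split; first exact: reduce_red.
  have H : ((size b * 2 + size s)%:R <= n%:R :> rat)%R by rewrite natrD natrM; lra.
  rewrite ler_nat in H.
  set t := drop (size s - i) s; set d := take (size s - i) s.
  have Es : s = d ++ t by rewrite cat_take_drop.
  have St : size t = i by rewrite size_drop subKn.
  rewrite [reduce (reduce _ ++ _)]reduce_cat act_reduce ?reduce_red // -reduce_cat.
  have -> : reduce ((b ++ t) ++ winv s) = act b (reduce (winv d)).
    rewrite [in winv s]Es winv_cat -catA reduce_cat catA reduce_cat act_inv //.
    exact: reduce_red.
  have H1 := size_act b (reduce (winv d)).
  have H2 : size (reduce (winv d)) <= size d.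
    by have := size_act (winv d) [::]; rewrite /winv size_rev size_map addn0.
  have H3 : size (reduce (b ++ t)) <= size b + size t.
    by have := size_act (b ++ t) [::]; rewrite size_cat addn0.
  have H4 : size s = size d + size t by rewrite {1}Es size_cat.
  lia.
Qed.
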